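(* Let $v\ge 2$, $l\ge 1$ and $t\ge1$ be integers, put $n=vl$, and assume $n\ge 2vt$. Let $B$ be the set of sequences $\sigma\in\mathbb{Z}_v^n$ (indexed by $\mathbb{Z}_n$) in which every symbol occurs exactly $l$ times, and choose $\sigma\in B$ uniformly at random. For $b\in\mathbb{Z}_v$ let $$\rho(b,t)=\#\{i\in\mathbb{Z}_n:\ \sigma(i-1)\neq b,\ \sigma(i+t)\neq b,\ \sigma(i+\iota)=b\text{ for all }0\le\iota<t\},$$ indices taken modulo $n$. Then $$E(\rho(b,t))=\frac{(l(v-1)-1)(v-1)\,l\,(l)_t}{(n-1)_{t+1}},$$ $$\mathrm{VAR}(\rho(b,t))=\frac{(l(v-1)-1)(v-1)l(l)_t}{(n-1)_{t+1}}-\left(\frac{(l(v-1)-1)(v-1)l(l)_t}{(n-1)_{t+1}}\right)^2+\frac{(v-1)\,l\,(l)_{2t}\,(l(v-1)-1)^2\,(l(v-1)-2)}{(n-1)_{2t+2}}.$$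
   Context: $(x)_m=x(x-1)\cdots(x-m+1)$ denotes the falling factorial. $\rho(b,t)$ is the number of (cyclic) runs of symbol $b$ of length exactly $t$ in $\sigma$. *)

(* Defs.v *)
From mathcomp Require Import all_boot all_order all_algebra.
Set Implicit Arguments. Unset Strict Implicit. Unset Printing Implicit Defensive.
Import GRing.Theory Num.Theory.

Definition word (v n : nat) := {ffun 'I_n -> 'I_v}.

Definition sym_at v n (s : word v n) (k : nat) (b : 'I_v) : bool :=
  [exists j : 'I_n, (val j == k %% n) && (s j == b)].

Definition balanced v n l (s : word v n) : bool :=
  [forall b : 'I_v, #|[set i : 'I_n | s i == b]| == l].

Definition rho v n (s : word v n) (b : 'I_v) (t : nat) : nat :=
  #|[set i : 'I_n | [&& ~~ sym_at s (i + n - 1) b, ~~ sym_at s (i + t) b &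
                        [forall k : 'I_t, sym_at s (i + k) b]]]|.

Definition E_rho v l (b : 'I_v) (t : nat) : rat :=
  (\sum_(s : word v (v * l) | balanced l s) (rho s b t)%:R)
  / (#|[set s : word v (v * l) | balanced l s]|)%:R.

Definition E_rho2 v l (b : 'I_v) (t : nat) : rat :=
  (\sum_(s : word v (v * l) | balanced l s) ((rho s b t)%:R ^+ 2))
  / (#|[set s : word v (v * l) | balanced l s]|)%:R.

Definition VAR_rho v l (b : 'I_v) (t : nat) : rat :=
  E_rho2 l b t - (E_rho l b t) ^+ 2.

(* Main.v *)
Require Import Defs.
From mathcomp Require Import all_boot all_order all_algebra all_fingroup zify ring.
Set Implicit Arguments. Unset Strict Implicit. Unset Printing Implicit Defensive.

Lemma count_sets (T : finType) (P Q : {set T}) l : [disjoint P & Q] -> #|P| <= l ->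
 #|[set S : {set T} | [&& #|S| == l, P \subset S & [disjoint Q & S]]]|
   = 'C(#|T| - #|P| - #|Q|, l - #|P|).
Proof.
move=> dPQ lePl.
have cU : #|P :|: Q| = #|P| + #|Q|.
  by rewrite cardsU (disjoint_setI0 dPQ) cards0 subn0.
have -> : #|T| - #|P| - #|Q| = #|~: (P :|: Q)|.
  have := cardsC (P :|: Q); rewrite cU; lia.
rewrite -cards_draws.
have -> : [set S : {set T} | [&& #|S| == l, P \subset S & [disjoint Q & S]]]
   = (fun A => A :|: P) @: [set A : {set T} | A \subset ~: (P :|: Q) & #|A| == l - #|P|].
  apply/setP => S; rewrite inE; apply/idP/imsetP.
  - case/and3P => /eqP cS sPS dQS; exists (S :\: P).
      rewrite inE; apply/andP; split.
        apply/subsetP => x; rewrite !inE => /andP[xP xS]; rewrite (negbTE xP) /=.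
        by apply/negP => xQ; move/disjointFr: dQS => /(_ x xQ); rewrite xS.
      by rewrite cardsD (setIidPr sPS) cS.
    apply/setP => x; rewrite !inE; case xP: (x \in P); rewrite ?orbT ?orbF ?andbT //=; exact: (subsetP sPS).
  - case=> A; rewrite inE => /andP[sA /eqP cA] ->.
    have dAP : [disjoint A & P].
      rewrite disjoints_subset; apply/subsetP => x xA; move/subsetP: sA => /(_ x xA).
      by rewrite !inE negb_or => /andP[].
    apply/and3P; split.
    + by rewrite cardsU (disjoint_setI0 dAP) cards0 subn0 cA subnK.
    + exact: subsetUr.
    + rewrite disjoints_subset; apply/subsetP => x xQ; rewrite !inE negb_or.
      apply/andP; split.
        by apply/negP => xA; move/subsetP: sA => /(_ x xA); rewrite !inE xQ orbT.
      by apply/negP => xP; rewrite (disjointFr dPQ xP) in xQ.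
rewrite card_in_imset // => A1 A2; rewrite !inE => /andP[s1 _] /andP[s2 _] e.
apply/setP => x; move/setP: e => /(_ x); rewrite !inE.
case xP: (x \in P); last by rewrite !orbF.
move=> _.
have h1 : x \notin A1 by apply/negP => /(subsetP s1); rewrite !inE xP.
have h2 : x \notin A2 by apply/negP => /(subsetP s2); rewrite !inE xP.
by rewrite (negbTE h1) (negbTE h2).
Qed.
Lemma nth_index_inj (T : eqType) (s1 s2 : seq T) x y : uniq s2 -> size s1 = size s2 ->
  x \in s1 -> y \in s1 -> nth x s2 (index x s1) = nth y s2 (index y s1) -> x = y.
Proof.
move=> u2 sz xs ys e.
have ix : index x s1 < size s2 by rewrite -sz index_mem.
have iy : index y s1 < size s2 by rewrite -sz index_mem.
rewrite (set_nth_default y) // in e.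
move/eqP: e; rewrite nth_uniq // => /eqP; exact: index_inj.
Qed.

Lemma nth_index_mem (T : eqType) (s1 s2 : seq T) x : size s1 = size s2 ->
  x \in s1 -> nth x s2 (index x s1) \in s2.
Proof. by move=> sz xs; apply: mem_nth; rewrite -sz index_mem. Qed.

Lemma exists_bij (T : finType) (S S' : {set T}) : #|S| = #|S'| ->
  exists f : T -> T, injective f /\ forall x, (f x \in S) = (x \in S').
Proof.
move=> cS.
have cC : #|~: S'| = #|~: S|.
  have := cardsC S; have := cardsC S'; lia.
pose f x := if x \in S' then nth x (enum S) (index x (enum S'))
            else nth x (enum (~: S)) (index x (enum (~: S'))).
have sz1 : size (enum S') = size (enum S) by rewrite -!cardE.
have sz2 : size (enum (~: S')) = size (enum (~: S)) by rewrite -!cardE.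
have fS x : (f x \in S) = (x \in S').
  rewrite /f; case xS: (x \in S').
    by rewrite -mem_enum nth_index_mem // mem_enum.
  apply/negbTE; have : nth x (enum (~: S)) (index x (enum (~: S'))) \in enum (~: S).
    by apply: nth_index_mem => //; rewrite mem_enum inE xS.
  by rewrite mem_enum inE.
exists f; split => // x y e.
have xy : (x \in S') = (y \in S') by rewrite -fS -(fS y) e.
move: e; rewrite /f -xy; case xS: (x \in S') => e.
  by apply: nth_index_inj e; rewrite ?enum_uniq ?mem_enum // -xy.
by apply: nth_index_inj e; rewrite ?enum_uniq ?mem_enum ?inE -?xy ?xS.
Qed.

Definition Sb v n (s : word v n) (b : 'I_v) : {set 'I_n} := [set i | s i == b].

Lemma fib_le v n l (b : 'I_v) (S S' : {set 'I_n}) : #|S| = #|S'| ->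
  #|[set s : word v n | balanced l s & Sb s b == S]|
  <= #|[set s : word v n | balanced l s & Sb s b == S']|.
Proof.
move=> cS; have [f [finj fS]] := exists_bij cS.
pose p := perm finj.
pose phi (s : word v n) : word v n := [ffun x => s (p x)].
have phi_inj : injective phi.
  move=> s1 s2 e; apply/ffunP => y.
  have := congr1 (fun g : word v n => g (p^-1 y)%g) e.
  by rewrite /phi !ffunE permKV.
rewrite -(card_imset _ phi_inj); apply: subset_leq_card; apply/subsetP => _ /imsetP[s sin ->].
move: sin; rewrite !inE => /andP[bal /eqP SbS]; apply/andP; split.
  apply/forallP => c; move/forallP: bal => /(_ c) /eqP cc.
  rewrite -cc -(card_preimset [set i | s i == c] (@perm_inj _ p)).
  by apply/eqP; apply: eq_card => x; rewrite !inE /phi ffunE.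
apply/eqP/setP => x; rewrite !inE /phi ffunE permE.
by rewrite -fS -SbS inE.
Qed.


Definition inS n (S : {set 'I_n}) (k : nat) : bool :=
  [exists j : 'I_n, (val j == k %% n) && (j \in S)].

Lemma inS_mod n (S : {set 'I_n}) k1 k2 : k1 = k2 %[mod n] -> inS S k1 = inS S k2.
Proof. by rewrite /inS => ->. Qed.

Lemma count_offsets n (i : nat) (cP cQ : seq nat) l : 0 < n -> uniq (cP ++ cQ) ->
  all (fun c => c < n) (cP ++ cQ) -> size cP <= l ->
  #|[set S : {set 'I_n} | [&& #|S| == l, all (fun c => inS S (i + c)) cP
        & all (fun c => ~~ inS S (i + c)) cQ]]|
  = 'C(n - size cP - size cQ, l - size cP).
Proof.
case: n => // n' _ u al sl.
pose pos c : 'I_n'.+1 := inord ((i + c) %% n'.+1).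
have posv c : nat_of_ord (pos c) = (i + c) %% n'.+1 by rewrite /pos inordK // ltn_mod.
have inSE S c : inS S (i + c) = (pos c \in S).
  apply/existsP/idP => [[j /andP[/eqP vj jS]]|pS].
    by have -> : pos c = j by apply: val_inj; rewrite /= posv vj.
  by exists (pos c); rewrite pS andbT; apply/eqP; exact: posv.
have posinj : {in cP ++ cQ &, injective pos}.
  move=> c1 c2 c1in c2in /(congr1 (@nat_of_ord _)); rewrite !posv => /eqP.
  rewrite eqn_modDl !modn_small => [/eqP //||].
  - by move/allP: al => /(_ c2 c2in).
  - by move/allP: al => /(_ c1 c1in).
move: u; rewrite cat_uniq => /and3P[uP dPQ uQ].
pose P := [set x in map pos cP].
pose Q := [set x in map pos cQ].
have cP' : #|P| = size cP.
  rewrite cardsE -(size_map pos); apply/card_uniqP; rewrite map_inj_in_uniq // => c1 c2 h1 h2.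
  by apply: posinj; rewrite mem_cat ?h1 ?h2.
have cQ' : #|Q| = size cQ.
  rewrite cardsE -(size_map pos); apply/card_uniqP; rewrite map_inj_in_uniq // => c1 c2 h1 h2.
  by apply: posinj; rewrite mem_cat ?h1 ?h2 ?orbT.
have dPQ' : [disjoint P & Q].
  rewrite disjoints_subset; apply/subsetP => x; rewrite !inE => /mapP[c1 c1P ->].
  apply/mapP => [[c2 c2Q e]].
  have e12 : c1 = c2 by apply: posinj e; rewrite mem_cat ?c1P ?c2Q ?orbT.
  by move/hasPn: dPQ => /(_ c2 c2Q); rewrite -e12 c1P.
have := @count_sets _ P Q l dPQ'; rewrite card_ord cP' cQ' => <- //.
apply: eq_card => S; rewrite !inE; congr [&& _, _ & _].
  apply/allP/subsetP => [h x|h c cin]; first by rewrite inE => /mapP[c cin ->]; rewrite -inSE h.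
  by rewrite inSE h // inE map_f.
rewrite disjoint_sym disjoints_subset.
apply/allP/subsetP => [h x xS|h c cin]; first by rewrite !inE; apply/negP => /mapP[c cin e]; move: (h c cin); rewrite inSE -e xS.
by rewrite inSE; apply/negP => pS; move: (h _ pS); rewrite !inE map_f.
Qed.


Definition pat n (S : {set 'I_n}) t (i : nat) : bool :=
  [&& ~~ inS S (i + n - 1), ~~ inS S (i + t) & [forall k : 'I_t, inS S (i + k)]].

Lemma rhoE v n (s : word v n) b t : rho s b t = (\sum_(i < n) pat (Sb s b) t i)%N.
Proof.
have symE k : sym_at s k b = inS (Sb s b) k.
  by rewrite /sym_at /inS; apply: eq_existsb => j; rewrite inE.
rewrite /rho -sum1_card big_mkcond /=; apply: eq_bigr => i _.
rewrite inE /pat !symE; congr (nat_of_bool (_ && _)); congr (_ && _).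
by apply: eq_forallb => k; rewrite symE.
Qed.

Lemma inS_addn n (S : {set 'I_n}) k : inS S (k + n) = inS S k.
Proof. by apply: inS_mod; rewrite modnDr. Qed.

Lemma pat_addn n (S : {set 'I_n}) t k : pat S t (k + n) = pat S t k.
Proof.
rewrite /pat.
have -> : k + n + n - 1 = (k + n - 1) + n by case: n S => [|n] S; lia.
have -> : k + n + t = (k + t) + n by lia.
rewrite !inS_addn; congr [&& _, _ & _]; apply: eq_forallb => j.
by rewrite -addnA (addnC n) addnA inS_addn.
Qed.

Lemma sum_shift n (f : nat -> nat) i : (forall k, f (k + n) = f k) ->
  (\sum_(d < n) f (i + d) = \sum_(d < n) f d)%N.
Proof.
move=> fp; elim: i => [|i IH]; first by [].
rewrite -IH; case: n fp {IH} => [|n] fp; first by rewrite !big_ord0.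
rewrite big_ord_recr big_ord_recl /= addnC; congr (_ + _).
  by rewrite addn0 -(fp i); congr f; lia.
by apply: eq_bigr => j _; congr f; rewrite /bump /=; lia.
Qed.

Lemma sum_bool (T : finType) (P b : pred T) :
  (\sum_(x | P x) (b x : nat))%N = #|[set x | P x && b x]|.
Proof.
rewrite -sum1_card big_mkcond /= [RHS]big_mkcond /=; apply: eq_bigr => x _.
by rewrite inE; case: (P x); case: (b x).
Qed.

Lemma forall_iota t (p : nat -> bool) : [forall k : 'I_t, p k] = all p (iota 0 t).
Proof.
apply/forallP/allP => [h x|h x]; last by apply: h; rewrite mem_iota /=.
by rewrite mem_iota => /andP[_ xt]; exact: (h (Ordinal xt)).
Qed.

Lemma patD n (S : {set 'I_n}) t i d : 0 < n -> pat S t (i + d) =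
  [&& ~~ inS S (i + (d + n - 1)), ~~ inS S (i + (d + t))
    & all (fun c => inS S (i + c)) (iota d t)].
Proof.
move=> n0; rewrite /pat.
have -> : i + d + n - 1 = i + (d + n - 1) by lia.
rewrite (forall_iota t (fun k => inS S (i + d + k))) -addnA; congr [&& _, _ & _].
by rewrite -[d]addn0 iotaDl all_map addn0; apply: eq_all => c /=; rewrite addnA.
Qed.

Lemma pat0 n (S : {set 'I_n}) t i : 0 < n -> pat S t i =
  [&& ~~ inS S (i + (n - 1)), ~~ inS S (i + t)
    & all (fun c => inS S (i + c)) (iota 0 t)].
Proof. by move=> n0; rewrite -[i in LHS]addn0 patD // add0n. Qed.

Lemma uniq_blocks t d q : t <= d -> uniq q ->
  all (fun x => ~~ ((x < t) || (d <= x < d + t))) q -> uniq (iota 0 t ++ iota d t ++ q).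
Proof.
move=> td uq aq; rewrite cat_uniq iota_uniq cat_uniq iota_uniq uq /= andbT.
apply/andP; split.
  apply/hasPn => x; rewrite mem_cat mem_iota => /orP[|xq].
    by move=> h; rewrite mem_iota; lia.
  by move/allP: aq => /(_ x xq); rewrite mem_iota; lia.
apply/hasPn => x xq; move/allP: aq => /(_ x xq); rewrite mem_iota; lia.
Qed.

Definition cnt n l t i j := #|[set S : {set 'I_n} | (#|S| == l) && (pat S t i && pat S t j)]|.

Lemma all_iota_lt n a t : a + t <= n -> all (fun c => c < n) (iota a t).
Proof. by move=> h; apply/allP => x; rewrite mem_iota; lia. Qed.

Ltac boolsolve := by do ![case: (inS _ _) | case: (all _ _) | case: (_ == _)].

Lemma cnt0 n l t i : t + 2 <= n -> t <= l -> cnt n l t i i = 'C(n - t - 2, l - t).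
Proof.
move=> h1 h2; rewrite /cnt.
have -> : n - t - 2 = n - size (iota 0 t) - size [:: n-1; t] by rewrite size_iota /=; lia.
have -> : l - t = l - size (iota 0 t) by rewrite size_iota.
rewrite -(count_offsets i) ?size_iota //; last 3 first.
- lia.
- by rewrite cat_uniq iota_uniq /= !mem_iota !inE; lia.
- by rewrite all_cat all_iota_lt //=; lia.
apply: eq_card => S; rewrite !inE andbb pat0 /=; last lia.
boolsolve.
Qed.

Lemma cnt_zero1 n l t i d : 0 < n -> 1 <= d <= t -> cnt n l t i (i + d) = 0.
Proof.
move=> n0 hd; apply: eq_card0 => S; rewrite !inE pat0 // patD //.
have e : inS S (i + (d + n - 1)) = inS S (i + (d - 1)).
  by rewrite (_ : i + (d + n - 1) = i + (d - 1) + n) ?inS_addn //; lia.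
have m : d - 1 \in iota 0 t by rewrite mem_iota; lia.
rewrite e; apply/negP => /andP[_ /andP[/and3P[_ _ /allP A] /and3P[/negP h _ _]]].
by apply: h; exact: A _ m.
Qed.

Lemma cnt_zero2 n l t i d : 0 < n -> n - t <= d < n -> cnt n l t i (i + d) = 0.
Proof.
move=> n0 hd; apply: eq_card0 => S; rewrite !inE pat0 // patD //.
have m : n - 1 \in iota d t by rewrite mem_iota; lia.
apply/negP => /andP[_ /andP[/and3P[/negP h _ _] /and3P[_ _ /allP A]]].
by apply: h; exact: A _ m.
Qed.

Lemma cnt_aux n l t i d (q : seq nat) : 0 < n -> t <= d -> d + t <= n -> uniq q ->
  all (fun x => ~~ ((x < t) || (d <= x < d + t))) q -> all (fun x => x < n) q ->
  2 * t <= l ->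
  (forall S : {set 'I_n}, [&& ~~ inS S (i + (n - 1)), ~~ inS S (i + t),
       ~~ inS S (i + (d + n - 1)) & ~~ inS S (i + (d + t))]
     = all (fun c => ~~ inS S (i + c)) q) ->
  cnt n l t i (i + d) = 'C(n - 2 * t - size q, l - 2 * t).
Proof.
move=> n0 td dtn uq aq aqn tl hS; rewrite /cnt.
have sz : size (iota 0 t ++ iota d t) = 2 * t by rewrite size_cat !size_iota; lia.
rewrite -sz -(count_offsets i) ?sz //; last first.
- by rewrite !all_cat !all_iota_lt //= ?aqn; lia.
- by rewrite -catA; apply: uniq_blocks.
apply: eq_card => S; rewrite !inE pat0 // patD // all_cat -hS.
boolsolve.
Qed.

Lemma cnt_gen n l t i d : t + 2 <= d -> d + t + 2 <= n -> 2 * t <= l ->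
  cnt n l t i (i + d) = 'C(n - 2 * t - 4, l - 2 * t).
Proof.
move=> h1 h2 h3; apply: (@cnt_aux _ _ _ _ _ [:: n - 1; t; d - 1; d + t]) => //; try lia.
- by rewrite /= !inE; lia.
- by rewrite /=; lia.
- by rewrite /=; lia.
move=> S; rewrite (_ : i + (d + n - 1) = i + (d - 1) + n) ?inS_addn /=; last lia.
boolsolve.
Qed.

Lemma cnt_adj1 n l t i : 2 * t + 3 <= n -> 2 * t <= l ->
  cnt n l t i (i + t.+1) = 'C(n - 2 * t - 3, l - 2 * t).
Proof.
move=> h2 h3; apply: (@cnt_aux _ _ _ _ _ [:: n - 1; t; t.+1 + t]) => //; try lia.
- by rewrite /= !inE; lia.
- by rewrite /=; lia.
- by rewrite /=; lia.
move=> S; rewrite (_ : i + (t.+1 + n - 1) = i + t + n) ?inS_addn /=; last lia.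
boolsolve.
Qed.

Lemma cnt_adj2 n l t i : 2 * t + 3 <= n -> 2 * t <= l ->
  cnt n l t i (i + (n - t.+1)) = 'C(n - 2 * t - 3, l - 2 * t).
Proof.
move=> h2 h3; apply: (@cnt_aux _ _ _ _ _ [:: n - 1; t; n - t.+2]) => //; try lia.
- by rewrite /= !inE; lia.
- by rewrite /=; lia.
- by rewrite /=; lia.
move=> S; rewrite (_ : i + (n - t.+1 + n - 1) = i + (n - t.+2) + n) ?inS_addn /=; last lia.
rewrite (_ : n - t.+1 + t = n - 1); last lia.
boolsolve.
Qed.

Lemma sum_nat_zero m p (F : nat -> nat) : (forall d, m <= d < p -> F d = 0) ->
  \sum_(m <= d < p) F d = 0.
Proof.
move=> h; rewrite (eq_big_nat _ _ (F2 := fun _ => 0)) ?sum_nat_const_nat ?muln0 //.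
Qed.

Lemma sum_d n l t i : 0 < t -> 2 * t + 3 <= n -> 2 * t <= l ->
  \sum_(d < n) cnt n l t i (i + d) =
  'C(n - t - 2, l - t) + 2 * 'C(n - 2 * t - 3, l - 2 * t)
    + (n - 2 * t - 3) * 'C(n - 2 * t - 4, l - 2 * t).
Proof.
move=> t0 hn hl.
rewrite -(big_mkord xpredT (fun d => cnt n l t i (i + d))).
rewrite (@big_cat_nat _ _ _ 1) //=; last lia.
rewrite big_nat1 addn0 cnt0; try lia.
rewrite (@big_cat_nat _ _ _ t.+1) //=; try lia.
rewrite sum_nat_zero; last by move=> d hd; apply: cnt_zero1; lia.
rewrite (@big_cat_nat _ _ _ t.+2) //=; try lia.
rewrite big_nat1 cnt_adj1 //.
rewrite (@big_cat_nat _ _ _ (n - t.+1)) //=; try lia.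
rewrite (eq_big_nat _ _ (F2 := fun _ => 'C(n - 2 * t - 4, l - 2 * t))); last first.
  by move=> d hd; apply: cnt_gen; lia.
rewrite sum_nat_const_nat.
rewrite (@big_cat_nat _ _ _ (n - t)) //=; try lia.
rewrite (_ : n - t = (n - t.+1).+1); last lia.
rewrite big_nat1 cnt_adj2 //.
rewrite sum_nat_zero; last by move=> d hd; apply: cnt_zero2; lia.
rewrite (_ : n - t.+1 - t.+2 = n - 2 * t - 3); last lia.
lia.
Qed.

Lemma sumS1 n l t : t + 2 <= n -> t <= l ->
  \sum_(S : {set 'I_n} | #|S| == l) (\sum_(i < n) pat S t i) = n * 'C(n - t - 2, l - t).
Proof.
move=> h1 h2; rewrite exchange_big /=.
rewrite (eq_bigr (fun _ => 'C(n - t - 2, l - t))).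
  by rewrite sum_nat_const card_ord.
move=> i _; rewrite sum_bool -(cnt0 i h1 h2) /cnt.
by apply: eq_card => S; rewrite !inE andbb.
Qed.

Lemma sumS2 n l t : 0 < t -> 2 * t + 3 <= n -> 2 * t <= l ->
  \sum_(S : {set 'I_n} | #|S| == l) (\sum_(i < n) pat S t i) ^ 2 =
  n * ('C(n - t - 2, l - t) + 2 * 'C(n - 2 * t - 3, l - 2 * t)
    + (n - 2 * t - 3) * 'C(n - 2 * t - 4, l - 2 * t)).
Proof.
move=> t0 hn hl.
have n0 : 0 < n by lia.
have -> : \sum_(S : {set 'I_n} | #|S| == l) (\sum_(i < n) pat S t i) ^ 2 =
    \sum_(i < n) \sum_(j < n) cnt n l t i j.
  rewrite (eq_bigr (fun S => \sum_(i < n) \sum_(j < n) (pat S t i && pat S t j : nat))).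
    rewrite exchange_big /=; apply: eq_bigr => i _.
    rewrite exchange_big /=; apply: eq_bigr => j _.
    by rewrite sum_bool.
  move=> S _; rewrite expnS expn1 big_distrl /=; apply: eq_bigr => i _.
  rewrite big_distrr /=; apply: eq_bigr => j _.
  by case: (pat S t i); case: (pat S t j).
rewrite (eq_bigr (fun _ => 'C(n - t - 2, l - t) + 2 * 'C(n - 2 * t - 3, l - 2 * t)
    + (n - 2 * t - 3) * 'C(n - 2 * t - 4, l - 2 * t))).
  by rewrite sum_nat_const card_ord.
move=> i _; rewrite -(sum_d i t0 hn hl).
rewrite -(@sum_shift n (fun j => cnt n l t i j) i) //.
move=> k; rewrite /cnt; apply: eq_card => S; rewrite !inE pat_addn //.
Qed.
Lemma binff n l k m : k <= l ->
  'C(n - k - m, l - k) * n ^_ (k + m) = 'C(n, l) * l ^_ k * (n - l) ^_ m.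
Proof.
move=> kl.
have [mle|mgt] := leqP m (n - l); last first.
  rewrite (ffact_small mgt) muln0.
  have [kmn|kmn] := leqP (k + m) n; last by rewrite ffact_small // muln0.
  rewrite bin_small ?mul0n //; lia.
have [ln|ln] := leqP l n; last first.
  rewrite (bin_small ln) !mul0n.
  have [kmn|kmn] := leqP (k + m) n; last by rewrite ffact_small // muln0.
  rewrite bin_small ?mul0n //; lia.
set a := l - k; set b := n - l - m.
have e : n - k - m = a + b by rewrite /a /b; lia.
apply/eqP; rewrite -(@eqn_pmul2r (a`! * b`!)) ?muln_gt0 ?fact_gt0 //; apply/eqP.
transitivity (n`!).
  rewrite e; transitivity ('C(a + b, a) * (a`! * b`!) * n ^_ (k + m)); first ring.
  have hb := bin_fact (leq_addr b a); rewrite addKn in hb; rewrite hb.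
  rewrite -(ffact_fact (_ : k + m <= n)); last lia.
  by rewrite mulnC; congr (_ * _); congr (_`!); rewrite /a /b; lia.
rewrite -(bin_fact ln).
rewrite -(ffact_fact kl) -(ffact_fact mle).
rewrite (_ : n - l - m = b) // (_ : l - k = a) //.
ring.
Qed.

Lemma B_pos v l : 0 < l -> 0 < #|[set s : word v (v * l) | balanced l s]|.
Proof.
move=> l0.
have lt i : i < v * l -> i %/ l < v by rewrite ltn_divLR // mulnC.
pose s : word v (v * l) := [ffun i : 'I_(v * l) => Ordinal (lt _ (ltn_ord i))].
apply/card_gt0P; exists s; rewrite inE; apply/forallP => c; apply/eqP.
rewrite -sum1_card.
have -> : \sum_(i in [set i : 'I_(v * l) | s i == c]) 1 =
    \sum_(i < v * l) (c * l <= i < c * l + l : nat).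
  rewrite big_mkcond /=; apply: eq_bigr => i _; rewrite inE /s ffunE.
  have -> : (Ordinal (lt _ (ltn_ord i)) == c) = (i %/ l == c) by [].
  have -> : (i %/ l == c) = (c * l <= i < c * l + l).
    apply/eqP/andP => [<-|[h1 h2]].
      by split; [rewrite leq_trunc_div | rewrite -mulSnr ltn_ceil].
    apply/eqP; rewrite eqn_leq -ltnS !ltn_divLR // ?leq_divRL //.
    by rewrite h1 mulSnr h2.
  by case: (_ && _).
have cv : c * l + l <= v * l by rewrite -mulSnr leq_mul2r ltn_ord orbT.
rewrite -(big_mkord xpredT (fun i => (c * l <= i < c * l + l : nat))).
rewrite (@big_cat_nat _ _ _ (c * l)) //=; last lia.
rewrite sum_nat_zero; last by move=> d hd; rewrite (_ : c * l <= d = false) //; lia.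
rewrite (@big_cat_nat _ _ _ (c * l + l)) //=.
rewrite (@sum_nat_zero (c * l + l) (v * l)); last by move=> d hd; rewrite (_ : d < c * l + l = false) ?andbF //; lia.
rewrite (eq_big_nat _ _ (F2 := fun _ => 1)); last by move=> d hd; rewrite hd.
by rewrite sum_nat_const_nat; lia.
by rewrite leq_addr.
Qed.
Import GRing.Theory.
Local Open Scope ring_scope.

Lemma sum_fib v n l (b : 'I_v) (g : {set 'I_n} -> rat) :
  (\sum_(s : word v n | balanced l s) g (Sb s b)) * ('C(n, l))%:R
  = (#|[set s : word v n | balanced l s]|)%:R * \sum_(S : {set 'I_n} | #|S| == l) g S.
Proof.
pose fib S := #|[set s : word v n | balanced l s & Sb s b == S]|.
have fc (S S' : {set 'I_n}) : #|S| == l -> #|S'| == l -> fib S = fib S'.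
  move=> /eqP cS /eqP cS'; apply/anti_leq; rewrite !fib_le //; congruence.
have bl s : balanced l s -> #|Sb s b| == l.
  by move/forallP/(_ b); rewrite /Sb.
have e1 : \sum_(s : word v n | balanced l s) g (Sb s b)
    = \sum_(S : {set 'I_n} | #|S| == l) (fib S)%:R * g S.
  rewrite (partition_big (fun s => Sb s b) (fun S : {set 'I_n} => #|S| == l)) /=; last by move=> s /bl.
  apply: eq_bigr => S _.
  rewrite (eq_bigr (fun _ => g S)); last by move=> s /andP[_ /eqP ->].
  rewrite sumr_const mulr_natl /fib; congr (_ *+ _).
  by apply: eq_card => s; rewrite !inE.
have e2 : #|[set s : word v n | balanced l s]| = (\sum_(S : {set 'I_n} | #|S| == l) fib S)%N.
  rewrite -sum1_card (partition_big (fun s => Sb s b) (fun S : {set 'I_n} => #|S| == l)) /=.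
    apply: eq_bigr => S _; rewrite sum1_card /fib; apply: eq_card => s; rewrite !inE.
    by rewrite unfold_in /= inE.
  by move=> s; rewrite inE => /bl.
rewrite e1 e2 natr_sum.
have -> : ('C(n, l))%:R = (\sum_(S' : {set 'I_n} | #|S'| == l) 1 : rat).
  have -> : 'C(n, l) = #|[set A : {set 'I_n} | #|A| == l]| by rewrite card_draws card_ord.
  by rewrite sumr_const; congr (_ *+ _); apply: eq_card => S; rewrite !inE.
rewrite [LHS]big_distrr [RHS]big_distrl /=; apply: eq_bigr => S' cS'.
rewrite mulr1 big_distrr /=; apply: eq_bigr => S cS.
by rewrite (fc S S').
Qed.

Import Num.Theory.
Unset Implicit Arguments.


Lemma final_nat (M X : nat) : (1 < M)%N ->
  (2 * (X * M ^_ 3) + X * M ^_ 4 = X * M * (M - 1) ^ 2 * (M - 2))%N.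
Proof.
case: M => [|[|[|m]]] // _.
  by rewrite !ffactSS !ffact0n /= !muln0.
rewrite !ffactSS !ffactn1 !subSS !subn0 expnS expn1.
rewrite muln1 -[m.+3]addn3 -[m.+2]addn2 -[m.+1]addn1. ring.
Qed.

Theorem theorem6 (v l t : nat) (b : 'I_v) :
  (2 <= v)%N -> (1 <= l)%N -> (1 <= t)%N -> (2 * v * t <= v * l)%N ->
  let n := (v * l)%N in
  let mu : rat :=
    (((l * (v - 1))%:R - 1) * (v - 1)%:R * l%:R * (l ^_ t)%:R)
      / ((n.-1) ^_ t.+1)%:R in
  E_rho l b t = mu /\
  ((0 < (n.-1) ^_ (2 * t + 2))%N ->
  VAR_rho l b t =
    mu - mu ^+ 2 +
    ((v - 1)%:R * l%:R * (l ^_ (2 * t))%:R * ((l * (v - 1))%:R - 1) ^+ 2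
       * ((l * (v - 1))%:R - 2)) / ((n.-1) ^_ (2 * t + 2))%:R).
Proof.
move=> hv hl ht hn n mu.
have l2t : (2 * t <= l)%N.
  by rewrite -mulnA mulnC -mulnA leq_pmul2l in hn; [rewrite mulnC | lia].
pose M := (n - l)%N.
have lvM : (l * (v - 1) = M)%N by rewrite /M /n mulnBr muln1 mulnC.
have vlM : ((v - 1) * l = M)%N by rewrite mulnC.
have M2 : (2 <= M)%N by rewrite -lvM; nia.
have nM : (n = M + l)%N by rewrite /M /n; nia.
pose C := 'C(n, l).
have C0 : (0 < C)%N by rewrite bin_gt0 /n; nia.
pose Bc := #|[set s : word v n | balanced l s]|.
have Bc0 : (0 < Bc)%N by apply: B_pos; lia.
have CR : (C%:R : rat) != 0 by rewrite pnatr_eq0 -lt0n.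
have BR : (Bc%:R : rat) != 0 by rewrite pnatr_eq0 -lt0n.
pose C1 := 'C(n - t - 2, l - t).
pose K := (n * (2 * 'C(n - 2 * t - 3, l - 2 * t)
    + (n - 2 * t - 3) * 'C(n - 2 * t - 4, l - 2 * t)))%N.
have S1 : (\sum_(s : word v n | balanced l s) ((rho s b t)%:R : rat)) * C%:R
    = Bc%:R * (n * C1)%:R.
  rewrite (eq_bigr (fun s => ((\sum_(i < n) pat (Sb s b) t i)%N%:R : rat))); last first.
    by move=> s _; rewrite rhoE.
  rewrite (@sum_fib v n l b (fun S => ((\sum_(i < n) pat S t i)%N%:R : rat))).
  by rewrite -natr_sum sumS1 //; lia.
have E1 : E_rho l b t = (n * C1)%:R / C%:R.
  rewrite /E_rho -/n -/Bc; apply/eqP; rewrite eqr_div // S1; apply/eqP; ring.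
have lvR : ((l * (v - 1))%:R : rat) = M%:R by rewrite lvM.
have Emu : E_rho l b t = mu.
  rewrite E1 /mu; apply/eqP; rewrite eqr_div //; last first.
    by rewrite pnatr_eq0 -lt0n ffact_gt0 /n; nia.
  rewrite lvR -(natrB _ (_ : 1 <= M)%N); last lia.
  rewrite -!natrM eqr_nat; apply/eqP.
  have h := @binff n l t 2 (leq_trans (leq_pmull _ (isT : (0 < 2)%N)) l2t).
  have e1 : (n * C1 * n.-1 ^_ t.+1 = C1 * n ^_ (t + 2))%N by rewrite addn2 ffactnS mulnAC mulnC.
  have e2 : ((M - 1) * (v - 1) * l = (M - 1) * M)%N by rewrite -mulnA vlM.
  rewrite e1 h -/C -/M e2 ffactnS ffactn1 -subn1; nia.
split => // hZ.
have hn3 : (2 * t + 3 <= n)%N by move: hZ; rewrite ffact_gt0; lia.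
have S2 : (\sum_(s : word v n | balanced l s) ((rho s b t)%:R ^+ 2 : rat)) * C%:R
    = Bc%:R * (n * C1 + K)%:R.
  rewrite (eq_bigr (fun s => ((\sum_(i < n) pat (Sb s b) t i) ^ 2)%N%:R : rat)); last first.
    by move=> s _; rewrite rhoE natrX.
  rewrite (@sum_fib v n l b (fun S => (((\sum_(i < n) pat S t i) ^ 2)%N%:R : rat))).
  rewrite -natr_sum sumS2 //; try lia.
  by congr (_ * _%:R); rewrite /K /C1; ring.
have E2 : E_rho2 l b t = (n * C1 + K)%:R / C%:R.
  rewrite /E_rho2 -/n -/Bc; apply/eqP; rewrite eqr_div // S2; apply/eqP; ring.
have ZR : ((n.-1 ^_ (2 * t + 2))%:R : rat) != 0 by rewrite pnatr_eq0 -lt0n.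
have hK : (K%:R / C%:R : rat) = ((v - 1)%:R * l%:R * (l ^_ (2 * t))%:R
    * ((l * (v - 1))%:R - 1) ^+ 2 * ((l * (v - 1))%:R - 2)) / ((n.-1) ^_ (2 * t + 2))%:R.
  apply/eqP; rewrite eqr_div //.
  rewrite lvR -(natrB _ (_ : 1 <= M)%N); last lia.
  rewrite -(natrB _ (_ : 2 <= M)%N) //.
  rewrite -!natrX -!natrM eqr_nat; apply/eqP.
  have nZ : (n * n.-1 ^_ (2 * t + 2) = n ^_ (2 * t + 3))%N.
    by rewrite (_ : (2 * t + 3 = (2 * t + 2).+1)%N) ?ffactnS //; lia.
  have h3 := @binff n l (2 * t) 3 l2t.
  rewrite -/C -/M in h3.
  set q := (n - 2 * t - 3)%N.
  set C3 := 'C(n - 2 * t - 3, l - 2 * t).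
  set C4 := 'C(n - 2 * t - 4, l - 2 * t).
  set L := l ^_ (2 * t).
  have h4 : (q * C4 * n ^_ (2 * t + 3) = C * L * M ^_ 4)%N.
    have [ngt|neq] : (2 * t + 3 < n)%N \/ n = (2 * t + 3)%N by lia.
      have := @binff n l (2 * t) 4 l2t.
      rewrite (_ : (2 * t + 4 = (2 * t + 3).+1)%N) ?ffactnSr; last lia.
      rewrite -/C -/M -/C4 -/L (_ : (n - (2 * t + 3) = q)%N); last by rewrite /q; lia.
      by move=> <-; ring.
    rewrite (_ : q = 0%N); last by rewrite /q; lia.
    rewrite (@ffact_small M 4) ?muln0 ?mul0n //; lia.
  rewrite /K.
  transitivity (2 * (C3 * n ^_ (2 * t + 3)) + q * C4 * n ^_ (2 * t + 3))%N.
    by rewrite -nZ; ring.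
  rewrite h3 h4 vlM.
  have := @final_nat M (C * L) M2.
  move=> e; transitivity (C * L * M * (M - 1) ^ 2 * (M - 2))%N.
    by rewrite -e; ring.
  by set u := (M - 1)%N; set w := (M - 2)%N; ring.
rewrite /VAR_rho E2 Emu natrD mulrDl -E1 Emu hK.
ring.
Qed.
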